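(* Let $X$ be a finite set of nodes of the triangular grid with $G_X$ connected and without holes. Let $P$ be an $x$-portal dividing $X$ into sides $A$ and $B$, let $S\subseteq A\cup P$ be non-empty, and let $u\in B'=B\cap\mathrm{vis}(P)$ with $\Delta_u\subseteq X$. Then $n_z(u)$ is a feasible parent of $u$ if $\mathrm{dist}(S,\pi_z(u))\le\mathrm{dist}(S,\pi_y(u))$, and $n_y(u)$ is a feasible parent of $u$ if $\mathrm{dist}(S,\pi_z(u))\ge\mathrm{dist}(S,\pi_y(u))$.
   Context: $G_\Delta=(V_\Delta,E_\Delta)$ is the infinite regular triangular grid graph, with edges parallel to three axes: $x$ (west–east), $y$, $z$. $G_X$ is the subgraph induced by $X$; $X$ has no holes if the subgraph induced by $V_\Delta\setminus X$ is connected. $\mathrm{dist}$ is the distance in $G_X$ and $\mathrm{dist}(S,v)=\min_{s\in S}\mathrm{dist}(s,v)$. For an axis $d$, the $d$-portals are the vertex sets of the connected components of $(X,E_d)$, $E_d$ being the edges of $G_X$ parallel to $d$; $\mathrm{portal}_d(u)$ is the $d$-portal containing $u$. For the $x$-portal $P$ (a horizontal segment), $A$ is the union of the components of the subgraph induced by $X\setminus P$ that contain a node adjacent to $P$ on one side (half-plane) of the line through $P$, and $B=X\setminus(P\cup A)$. An amoebot $v$ is visible by $w$ if $v\in\mathrm{portal}_x(w)\cup\mathrm{portal}_y(w)\cup\mathrm{portal}_z(w)$; $\mathrm{vis}(P)=\bigcup_{w\in P}(\mathrm{portal}_x(w)\cup\mathrm{portal}_y(w)\cup\mathrm{portal}_z(w))$.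 For $u\in B'$, $\pi_y(u),\pi_z(u)\in V_\Delta$ are the projections of $u$ along the $y$- and $z$-axis onto the line through $P$; $\Delta_u$ is the set of nodes of $V_\Delta$ in the (closed) triangle with corners $u,\pi_y(u),\pi_z(u)$; $n_y(u),n_z(u)\in V_\Delta$ are the neighbors of $u$ in the direction of $\pi_y(u)$ and $\pi_z(u)$, respectively. A neighbor $v\in X$ of $u$ is a feasible parent of $u$ (with respect to $S$) if $\mathrm{dist}(S,u)=\mathrm{dist}(S,v)+1$. *)

(* Defs.v *)
From Stdlib Require Import ZArith QArith List.
Open Scope Z_scope.

(* A node (a,b) of the triangular grid sits at a*e_x + b*e_y in the plane,
   with e_x = (1,0) (west-east) and e_y = (1/2, sqrt 3/2).  The three axes:
   x : (+-1, 0),  y : (0, +-1),  z : +-(-1, 1) = e_y - e_x.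
   Horizontal lines are the sets {b = const}. *)
Definition node := (Z * Z)%type.

Inductive axis := AxX | AxY | AxZ.

Definition edge_d (d : axis) (u v : node) : Prop :=
  let da := fst v - fst u in let db := snd v - snd u in
  match d with
  | AxX => (da = 1 \/ da = -1) /\ db = 0
  | AxY => da = 0 /\ (db = 1 \/ db = -1)
  | AxZ => (da = -1 /\ db = 1) \/ (da = 1 /\ db = -1)
  end.

Definition adj (u v : node) : Prop :=
  edge_d AxX u v \/ edge_d AxY u v \/ edge_d AxZ u v.

Inductive walk (Y : node -> Prop) (E : node -> node -> Prop)
  : node -> node -> nat -> Prop :=
| walk_refl : forall u, Y u -> walk Y E u u 0
| walk_step : forall u w v n, Y u -> E u w -> walk Y E w v n ->
    walk Y E u v (S n).

Definition connected_in (Y : node -> Prop) (E : node -> node -> Prop)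
  (u v : node) : Prop := exists n, walk Y E u v n.

Definition finite_set (X : node -> Prop) : Prop :=
  exists l : list node, forall v, X v -> In v l.

Definition graph_connected (X : node -> Prop) : Prop :=
  forall u v, X u -> X v -> connected_in X adj u v.

Definition no_holes (X : node -> Prop) : Prop :=
  forall u v, ~ X u -> ~ X v -> connected_in (fun w => ~ X w) adj u v.

Definition portal (X : node -> Prop) (d : axis) (u : node) (v : node) : Prop :=
  connected_in X (edge_d d) u v.

Definition vis (X : node -> Prop) (P : node -> Prop) (v : node) : Prop :=
  exists w, P w /\
    (portal X AxX w v \/ portal X AxY w v \/ portal X AxZ w v).

Definition on_side (s : bool) (b0 : Z) (v : node) : Prop :=
  if s then b0 < snd v else snd v < b0.

Definition sideA (X P : node -> Prop) (s : bool) (b0 : Z) (v : node) : Prop :=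
  X v /\ ~ P v /\
  exists w, connected_in (fun t => X t /\ ~ P t) adj w v /\
            (exists p, P p /\ adj w p) /\ on_side s b0 w.

Definition sideB (X P : node -> Prop) (s : bool) (b0 : Z) (v : node) : Prop :=
  X v /\ ~ P v /\ ~ sideA X P s b0 v.

Definition distS (X S : node -> Prop) (v : node) (n : nat) : Prop :=
  (exists s, S s /\ walk X adj s v n) /\
  (forall s m, S s -> walk X adj s v m -> (n <= m)%nat).

(* projections onto the line {b = b0} along the y- and z-axis *)
Definition pi_y (b0 : Z) (u : node) : node := (fst u, b0).
Definition pi_z (b0 : Z) (u : node) : node := (fst u + snd u - b0, b0).

(* neighbours of u in the direction of pi_y(u), pi_z(u) *)
Definition n_y (b0 : Z) (u : node) : node :=
  (fst u, snd u - Z.sgn (snd u - b0)).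
Definition n_z (b0 : Z) (u : node) : node :=
  (fst u + Z.sgn (snd u - b0), snd u - Z.sgn (snd u - b0)).

(* v lies in the closed triangle with corners c1 c2 c3 (convex combination;
   axial coordinates are an affine image of the plane) *)
Definition in_triangle (c1 c2 c3 v : node) : Prop :=
  exists l1 l2 l3 : Q,
    (0 <= l1)%Q /\ (0 <= l2)%Q /\ (0 <= l3)%Q /\ (l1 + l2 + l3 == 1)%Q /\
    (inject_Z (fst v) == l1 * inject_Z (fst c1) + l2 * inject_Z (fst c2)
                          + l3 * inject_Z (fst c3))%Q /\
    (inject_Z (snd v) == l1 * inject_Z (snd c1) + l2 * inject_Z (snd c2)
                          + l3 * inject_Z (snd c3))%Q.

Definition Delta (b0 : Z) (u : node) (v : node) : Prop :=
  in_triangle u (pi_y b0 u) (pi_z b0 u) v.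

Definition feasible_parent (X S : node -> Prop) (u v : node) : Prop :=
  X v /\ adj u v /\
  exists du dv, distS X S u du /\ distS X S v dv /\ du = (dv + 1)%nat.

(* Main.v *)
Require Import Defs.
From Stdlib Require Import ZArith QArith List Lia Field Classical.
Open Scope Z_scope.
Lemma inject_Z_minus' x y : inject_Z (x - y) = (inject_Z x - inject_Z y)%Q.
Proof. unfold Z.sub, Qminus. rewrite inject_Z_plus, inject_Z_opp. reflexivity. Qed.

Lemma Qdiv_nonneg (x y : Z) : 0 <= x -> 0 < y -> (0 <= inject_Z x / inject_Z y)%Q.
Proof.
  intros. apply Qle_shift_div_l.
  - change 0%Q with (inject_Z 0). rewrite <- Zlt_Qlt. auto.
  - rewrite Qmult_0_l. change 0%Q with (inject_Z 0). rewrite <- Zle_Qle. auto.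
Qed.

Lemma tri_in (b0 a b sg h i t : Z) : (sg = 1 \/ sg = -1) -> 1 <= h -> b - b0 = sg * h ->
  0 <= i -> i <= t -> t <= h ->
  in_triangle (a, b) (a, b0) (a + b - b0, b0) (a + sg * i, b - sg * t).
Proof.
  intros Hs Hh Hb Hi Hit Hth.
  assert (Hb' : b = b0 + sg * h) by lia. subst b.
  exists (inject_Z (h - t) / inject_Z h)%Q, (inject_Z (t - i) / inject_Z h)%Q,
         (inject_Z i / inject_Z h)%Q.
  assert (Hh0 : ~ (inject_Z h == 0)%Q).
  { intro E. change 0%Q with (inject_Z 0) in E. rewrite inject_Z_injective in E. lia. }
  simpl.
  split; [apply Qdiv_nonneg; lia|].
  split; [apply Qdiv_nonneg; lia|].
  split; [apply Qdiv_nonneg; lia|].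
  repeat rewrite ?inject_Z_minus', ?inject_Z_plus, ?inject_Z_mult.
  split; [|split]; field; auto.
Qed.

Lemma walk_in Y E x y n : walk Y E x y n -> Y x /\ Y y.
Proof. induction 1; intuition. Qed.

Lemma walk_app Y E x y z n m : walk Y E x y n -> walk Y E y z m -> walk Y E x z (n + m).
Proof. induction 1; intros; simpl; auto. econstructor; eauto. Qed.

Lemma walk_snoc Y E x y z n : walk Y E x y n -> E y z -> Y z -> walk Y E x z (S n).
Proof. intros W e Hz. replace (S n) with (n + 1)%nat by lia.
  apply walk_app with y; auto. econstructor; eauto. apply walk_in in W; tauto. constructor; auto. Qed.

Lemma walk_rev Y E x y n : (forall a b, E a b -> E b a) -> walk Y E x y n -> walk Y E y x n.
Proof. intros Hs. induction 1. constructor; auto.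
  apply walk_snoc with w; auto. Qed.

Lemma walk_mono (Y Y' : node -> Prop) (E E' : node -> node -> Prop) x y n :
  (forall v, Y v -> Y' v) -> (forall a b, E a b -> E' a b) -> walk Y E x y n -> walk Y' E' x y n.
Proof. intros H1 H2. induction 1; econstructor; eauto. Qed.

Lemma adj_sym a b : adj a b -> adj b a.
Proof. unfold adj, edge_d. lia. Qed.

Lemma edge_sym d a b : edge_d d a b -> edge_d d b a.
Proof. destruct d; unfold edge_d; lia. Qed.

Lemma walk_lip Y x y n : walk Y adj x y n ->
  Z.abs (fst y - fst x) <= Z.of_nat n /\ Z.abs (snd y - snd x) <= Z.of_nat n /\
  Z.abs (fst y + snd y - fst x - snd x) <= Z.of_nat n.
Proof. induction 1. lia. unfold adj, edge_d in *. lia. Qed.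

Lemma walk_x Y x y n : walk Y (edge_d AxX) x y n -> snd y = snd x /\
  forall c, Z.min (fst x) (fst y) <= c <= Z.max (fst x) (fst y) -> Y (c, snd x).
Proof.
  induction 1 as [u Hu| u w v n Hu e W IH].
  - split; auto. intros c Hc. destruct u; simpl in *. replace c with z by lia. auto.
  - unfold edge_d in e. destruct IH as [IH1 IH2]. split. lia.
    intros c Hc. destruct (Z.eq_dec c (fst u)). subst c. destruct u; auto.
    replace (snd u) with (snd w) by lia. apply IH2. lia.
Qed.

Lemma walk_y Y x y n : walk Y (edge_d AxY) x y n -> fst y = fst x.
Proof. induction 1; unfold edge_d in *; lia. Qed.

Lemma walk_z Y x y n : walk Y (edge_d AxZ) x y n -> fst y + snd y = fst x + snd x.
Proof. induction 1; unfold edge_d in *; lia. Qed.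

Lemma line_walk (Y : node -> Prop) b0 : forall N c1 c2, Z.of_nat N = Z.abs (c1 - c2) ->
  (forall c, Z.min c1 c2 <= c <= Z.max c1 c2 -> Y (c, b0)) ->
  walk Y (edge_d AxX) (c1, b0) (c2, b0) N.
Proof.
  induction N; intros c1 c2 HN HY.
  - replace c2 with c1 by lia. constructor. apply HY; lia.
  - destruct (Z_lt_ge_dec c1 c2).
    + apply walk_step with (c1 + 1, b0). apply HY; lia. unfold edge_d; simpl; lia.
      apply IHN. lia. intros; apply HY; lia.
    + apply walk_step with (c1 - 1, b0). apply HY; lia. unfold edge_d; simpl; lia.
      apply IHN. lia. intros; apply HY; lia.
Qed.

Lemma ex_min (Q : nat -> Prop) : (exists n, Q n) -> exists n, Q n /\ forall m, Q m -> (n <= m)%nat.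
Proof.
  intros [n Hn]. apply Classical_Prop.NNPP. intro Hno.
  assert (forall k, forall m, (m <= k)%nat -> ~ Q m).
  { induction k; intros m Hm Qm.
    - apply Hno. exists m. split; auto. intros; lia.
    - destruct (Nat.eq_dec m (S k)).
      + subst. apply Hno. exists (S k). split; auto. intros m' Qm'.
        destruct (Nat.le_gt_cases (S k) m'); auto. exfalso. apply (IHk m'); auto. lia.
      + apply (IHk m); auto. lia. }
  apply (H n n); auto.
Qed.

Lemma walk_split X (P : node -> Prop) x y n : walk X adj x y n ->
  (exists p n1 n2, P p /\ walk X adj x p n1 /\ walk X adj p y n2 /\ (n1 + n2 = n)%nat) \/
  walk (fun t => X t /\ ~ P t) adj x y n.
Proof.
  induction 1 as [u Hu| u w v n Hu e W IH].
  - destruct (Classical_Prop.classic (P u)).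
    + left. exists u, 0%nat, 0%nat. repeat split; auto; constructor; auto.
    + right. constructor. auto.
  - destruct (Classical_Prop.classic (P u)).
    + left. exists u, 0%nat, (S n). repeat split; auto. constructor; auto. econstructor; eauto.
    + destruct IH as [[p [n1 [n2 [Hp [W1 [W2 Hn]]]]]]|IH].
      * left. exists p, (S n1), n2. repeat split; auto. econstructor; eauto. lia.
      * right. econstructor; eauto.
Qed.

Lemma arith_fin (h : Z) (du dv W W' : nat) : 1 <= h -> Z.of_nat W + h <= Z.of_nat du ->
  (W' <= W)%nat -> (du <= Nat.succ dv)%nat -> (dv <= W' + Z.to_nat (h - 1))%nat -> du = (dv + 1)%nat.
Proof. intros. rewrite <- Nat.add_1_r in *. lia. Qed.

Section Core.
Variables (X S P : node -> Prop) (b0 a b sg h : Z).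
Hypothesis Hs : sg = 1 \/ sg = -1.
Hypothesis Hh : 1 <= h.
Hypothesis Hb : b - b0 = sg * h.
Hypothesis HD : forall i t, 0 <= i -> i <= t -> t <= h -> X (a + sg * i, b - sg * t).

Lemma tri_walk_down : forall N i t k, Z.of_nat N = h - t -> 0 <= i -> i <= t -> t <= h ->
  i <= k <= i + (h - t) -> walk X adj (a + sg * i, b - sg * t) (a + sg * k, b0) N.
Proof.
  induction N; intros i t k HN Hi Hit Hth Hk.
  - replace (a + sg * k, b0) with (a + sg * i, b - sg * t).
    constructor. apply HD; lia. f_equal; destruct Hs; subst; lia.
  - destruct (Z.eq_dec i k).
    + apply walk_step with (a + sg * i, b - sg * (t + 1)). apply HD; lia.
      unfold adj, edge_d; simpl. destruct Hs; subst; lia.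
      apply IHN; lia.
    + apply walk_step with (a + sg * (i + 1), b - sg * (t + 1)). apply HD; lia.
      unfold adj, edge_d; simpl. destruct Hs; subst; lia.
      apply IHN; lia.
Qed.

Lemma tri_walk i t k : 0 <= i -> i <= t -> t <= h -> i <= k <= i + (h - t) ->
  walk X adj (a + sg * k, b0) (a + sg * i, b - sg * t) (Z.to_nat (h - t)).
Proof.
  intros. apply walk_rev. apply adj_sym. apply tri_walk_down; lia.
Qed.

Lemma lower c n : walk X adj (c, b0) (a, b) n ->
  exists k, 0 <= k <= h /\ h + Z.abs (c - (a + sg * k)) <= Z.of_nat n.
Proof.
  intros W. apply walk_lip in W. simpl in W.
  destruct Hs; subst sg.
  - destruct (Z_le_gt_dec c a). exists 0. lia.
    destruct (Z_le_gt_dec (a + h) c). exists h. lia. exists (c - a). lia.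
  - destruct (Z_le_gt_dec a c). exists 0. lia.
    destruct (Z_le_gt_dec c (a - h)). exists h. lia. exists (a - c). lia.
Qed.

Hypothesis HbaseP : forall k, 0 <= k <= h -> P (a + sg * k, b0).
Hypothesis HPline : forall p, P p -> snd p = b0.
Hypothesis HPwalk : forall p q, P p -> P q -> walk X adj p q (Z.to_nat (Z.abs (fst p - fst q))).
Hypothesis Hsplit : forall s n, S s -> walk X adj s (a, b) n ->
  exists p n1 n2, P p /\ walk X adj s p n1 /\ walk X adj p (a, b) n2 /\ (n1 + n2 = n)%nat.
Hypothesis Hex : exists s n, S s /\ walk X adj s (a, b) n.

Lemma base_bound du : distS X S (a, b) du ->
  exists k s W, 0 <= k <= h /\ S s /\ walk X adj s (a + sg * k, b0) W /\
     Z.of_nat W + h <= Z.of_nat du.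
Proof.
  intros [[s [Ss W]] _].
  destruct (Hsplit _ _ Ss W) as [p [n1 [n2 [Pp [W1 [W2 Hn]]]]]].
  destruct p as [c b1]. pose proof (HPline _ Pp) as E; simpl in E; subst b1.
  destruct (lower _ _ W2) as [k [Hk Hl]].
  exists k, s, (n1 + Z.to_nat (Z.abs (c - (a + sg * k))))%nat.
  refine (conj Hk (conj Ss (conj _ _))).
  - apply walk_app with (c, b0); auto; apply (HPwalk (c, b0) (a + sg * k, b0)); auto.
  - lia.
Qed.

Lemma feas_gen i0 du : distS X S (a, b) du -> i0 = 0 \/ i0 = 1 ->
  (forall k s W, 0 <= k <= h -> S s -> walk X adj s (a + sg * k, b0) W ->
     exists k' s' W', i0 <= k' <= i0 + h - 1 /\ S s' /\ walk X adj s' (a + sg * k', b0) W' /\ (W' <= W)%nat) ->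
  feasible_parent X S (a, b) (a + sg * i0, b - sg * 1).
Proof.
  intros Hdu Hi0 Hsh.
  destruct (base_bound _ Hdu) as [k [s [W [Hk [Ss [Ws HW]]]]]].
  destruct (Hsh _ _ _ Hk Ss Ws) as [k' [s' [W' [Hk' [Ss' [Ws' HW']]]]]].
  assert (Wv : walk X adj s' (a + sg * i0, b - sg * 1) (W' + Z.to_nat (h - 1))).
  { apply walk_app with (a + sg * k', b0); auto. apply tri_walk; lia. }
  destruct (ex_min (fun n => exists s, S s /\ walk X adj s (a + sg * i0, b - sg * 1) n))
    as [dv [[s2 [Ss2 W2]] Hmin]]. eauto.
  assert (Hadj : adj (a + sg * i0, b - sg * 1) (a, b)).
  { unfold adj, edge_d; simpl. destruct Hs; subst; lia. }
  split. apply HD; lia. split. apply adj_sym; auto.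
  exists du, dv. split; auto. split. { split. eauto. intros s3 m Ss3 W3. apply Hmin; eauto. }
  destruct Hdu as [_ Hdu].
  assert (du <= Nat.succ dv)%nat.
  { apply (Hdu s2 (Nat.succ dv)). auto. apply walk_snoc with (a + sg * i0, b - sg * 1); auto.
    replace (a, b) with (a + sg * 0, b - sg * 0) by (f_equal; lia). apply HD; lia. }
  assert (dv <= W' + Z.to_nat (h - 1))%nat by (apply Hmin; eauto).
  eapply arith_fin; eauto.
Qed.

Lemma core dz dy :
  distS X S (a + sg * h, b0) dz -> distS X S (a + sg * 0, b0) dy ->
  ((dz <= dy)%nat -> feasible_parent X S (a, b) (a + sg * 1, b - sg * 1)) /\
  ((dy <= dz)%nat -> feasible_parent X S (a, b) (a + sg * 0, b - sg * 1)).
Proof.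
  intros Hz Hy.
  destruct Hex as [s0 [n0 [Ss0 W0]]].
  destruct (ex_min (fun n => exists s, S s /\ walk X adj s (a, b) n)) as [du [Hdu1 Hdu2]]. eauto.
  assert (Hdu : distS X S (a, b) du). { split; auto. intros; apply Hdu2; eauto. }
  split; intros Hle.
  - apply (feas_gen 1 du); auto. intros k s W Hk Ss Ws.
    destruct (Z.eq_dec k 0).
    + subst k. destruct Hz as [[sz [Ssz Wz]] _]. exists h, sz, dz. split. lia.
      split; auto. split; auto. destruct Hy as [_ Hy]. specialize (Hy s W Ss Ws). lia.
    + exists k, s, W. repeat split; auto; lia.
  - apply (feas_gen 0 du); auto. intros k s W Hk Ss Ws.
    destruct (Z.eq_dec k h).
    + subst k. destruct Hy as [[sz [Ssz Wz]] _]. exists 0, sz, dy. split. lia.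
      split; auto. split; auto. destruct Hz as [_ Hz]. specialize (Hz s W Ss Ws). lia.
    + exists k, s, W. repeat split; auto; lia.
Qed.
End Core.

Theorem mainTheorem19 :
  forall (X : node -> Prop) (p0 : node) (s : bool) (S : node -> Prop) (u : node),
    finite_set X ->
    graph_connected X ->
    no_holes X ->
    X p0 ->
    let P := portal X AxX p0 in
    let b0 := snd p0 in
    (forall v, S v -> sideA X P s b0 v \/ P v) ->
    (exists v, S v) ->
    sideB X P s b0 u ->
    vis X P u ->
    (forall v, Delta b0 u v -> X v) ->
    (forall dz dy, distS X S (pi_z b0 u) dz -> distS X S (pi_y b0 u) dy ->
       (dz <= dy)%nat -> feasible_parent X S u (n_z b0 u)) /\
    (forall dz dy, distS X S (pi_z b0 u) dz -> distS X S (pi_y b0 u) dy ->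
       (dy <= dz)%nat -> feasible_parent X S u (n_y b0 u)).
Proof.
  intros X p0 side S u _ Hconn _ Xp0 P b0 HS HSne HB Hvis HDelta.
  destruct u as [a b].
  assert (HPline : forall p, P p -> snd p = b0).
  { intros p [n W]. apply walk_x in W. tauto. }
  assert (HPX : forall p, P p -> X p).
  { intros p [n W]. apply walk_in in W. tauto. }
  assert (HPwalk : forall p q, P p -> P q -> walk X adj p q (Z.to_nat (Z.abs (fst p - fst q)))).
  { intros p q [n1 W1] [n2 W2]. apply walk_x in W1. apply walk_x in W2.
    destruct W1 as [E1 I1]. destruct W2 as [E2 I2].
    destruct p as [c1 d1], q as [c2 d2]. simpl in *. subst d1 d2.
    apply walk_mono with X (edge_d AxX); auto. intros; unfold adj; auto.
    apply line_walk. lia. intros c Hc.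
    destruct (Z_le_gt_dec (Z.min (fst p0) c1) c).
    destruct (Z_le_gt_dec c (Z.max (fst p0) c1)).
    apply I1; lia. apply I2; lia. apply I2; lia. }
  destruct HB as [Xu [nPu nAu]].
  assert (Hw : b <> b0 /\ (P (a, b0) \/ P (a + b - b0, b0))).
  { destruct Hvis as [w [Pw [[n W]|[[n W]|[n W]]]]].
    - exfalso. apply nPu. destruct Pw as [n0 W0]. exists (n0 + n)%nat. eapply walk_app; eauto.
    - pose proof (walk_y _ _ _ _ W) as E. pose proof (HPline _ Pw) as E2.
      destruct w as [c d]; simpl in *. subst c d. split.
      intro; subst b. apply nPu; auto. left; auto.
    - pose proof (walk_z _ _ _ _ W) as E. pose proof (HPline _ Pw) as E2.
      destruct w as [c d]; simpl in *. subst d. split.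
      intro; subst b. apply nPu. replace a with c by lia. auto.
      right. replace (a + b - b0) with c by lia. auto. }
  destruct Hw as [Hbb Hw].
  assert (Hsg : exists sg h, (sg = 1 \/ sg = -1) /\ 1 <= h /\ b - b0 = sg * h /\ Z.sgn (b - b0) = sg).
  { destruct (Z_lt_ge_dec b0 b).
    - exists 1, (b - b0). split; auto. split. lia. split. lia. apply Z.sgn_pos; lia.
    - exists (-1), (b0 - b). split; auto. split. lia. split. lia. apply Z.sgn_neg; lia. }
  destruct Hsg as [sg [h [Hs [Hh [Hb Hsgn]]]]].
  assert (HD : forall i t, 0 <= i -> i <= t -> t <= h -> X (a + sg * i, b - sg * t)).
  { intros i t Hi Hit Hth. apply HDelta. unfold Delta, pi_y, pi_z. simpl.
    apply tri_in with h; auto. }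
  assert (HbaseP : forall k, 0 <= k <= h -> P (a + sg * k, b0)).
  { intros k Hk.
    assert (Hw' : exists k0, 0 <= k0 <= h /\ P (a + sg * k0, b0)).
    { destruct Hw as [Hw|Hw]. exists 0. split. lia. replace (a + sg * 0) with a by lia. auto.
      exists h. split. lia. replace (a + sg * h) with (a + b - b0) by lia. auto. }
    destruct Hw' as [k0 [Hk0 [n0 W0]]].
    exists (n0 + Z.to_nat (Z.abs (a + sg * k0 - (a + sg * k))))%nat.
    apply walk_app with (a + sg * k0, b0); auto.
    apply line_walk. lia. intros c Hc.
    assert (Hc' : exists k', 0 <= k' <= h /\ c = a + sg * k').
    { destruct Hs; subst sg. exists (c - a). lia. exists (a - c). lia. }
    destruct Hc' as [k' [Hk' ->]].
    replace b0 with (b - sg * h) by lia. apply HD; lia. }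
  assert (Hsplit : forall s n, S s -> walk X adj s (a, b) n ->
    exists p n1 n2, P p /\ walk X adj s p n1 /\ walk X adj p (a, b) n2 /\ (n1 + n2 = n)%nat).
  { intros s0 n Ss W. destruct (walk_split X P _ _ _ W) as [H|H]; auto.
    exfalso. destruct (HS _ Ss) as [HA|HP].
    - apply nAu. destruct HA as [Xs [nPs [w [[m Wm] [Hadj Hon]]]]].
      split; auto. split; auto. exists w. split; auto. exists (m + n)%nat.
      eapply walk_app; eauto.
    - apply walk_in in H. destruct H as [[_ H] _]. auto. }
  assert (Hex : exists s n, S s /\ walk X adj s (a, b) n).
  { destruct HSne as [s0 Ss0]. assert (X s0).
    { destruct (HS _ Ss0) as [[Hx _]|Hp]; auto. }
    destruct (Hconn s0 (a, b)) as [n W]; auto. eauto. }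
  pose proof (core X S P b0 a b sg h Hs Hh Hb HD HbaseP HPline HPwalk Hsplit Hex) as C.
  assert (Ez : pi_z b0 (a, b) = (a + sg * h, b0)) by (unfold pi_z; simpl; f_equal; lia).
  assert (Ey : pi_y b0 (a, b) = (a + sg * 0, b0)) by (unfold pi_y; simpl; f_equal; lia).
  assert (Enz : n_z b0 (a, b) = (a + sg * 1, b - sg * 1)) by (unfold n_z; simpl; rewrite Hsgn; f_equal; lia).
  assert (Eny : n_y b0 (a, b) = (a + sg * 0, b - sg * 1)) by (unfold n_y; simpl; rewrite Hsgn; f_equal; lia).
  rewrite Ez, Ey, Enz, Eny.
  split; intros dz dy Hz Hy Hle; apply (C dz dy Hz Hy); auto.
Qed.
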